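(* Let $\varepsilon\in\{1,-1\}$, $z\in\mathbb{Z}$, $F_k(z)=\varepsilon^kD_k(z)$, and $n\in\mathbb{Z}^+$. For every polynomial $x(k)\in\mathbb{Z}[k]$, $$\sum_{k=0}^{n-1}L^{*}(x(k))F_k(z)\equiv 0\pmod n,$$ where $L^{*}(x(k))=(k+1)x(k)-\varepsilon(2k+1)(2z+1)x(k-1)+k\,x(k-2)$.
   Context: $D_n(z)=\sum_{k=0}^{n}\binom{n}{k}\binom{n+k}{k}z^k$ (Delannoy polynomials). *)

(* Defs.v *)
From mathcomp Require Import all_boot all_order all_algebra.
Set Implicit Arguments. Unset Strict Implicit. Unset Printing Implicit Defensive.
Import Order.TTheory GRing.Theory Num.Theory.
Local Open Scope ring_scope.

Definition delannoy (n : nat) (z : int) : int :=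
  \sum_(0 <= k < n.+1) ('C(n, k) * 'C(n + k, k))%:R * z ^+ k.

Definition Fk (eps : int) (k : nat) (z : int) : int := eps ^+ k * delannoy k z.

Definition Lstar (eps z : int) (x : {poly int}) (k : nat) : int :=
  (k%:Z + 1) * x.[k%:Z]
  - eps * (2 * k%:Z + 1) * (2 * z + 1) * x.[k%:Z - 1]
  + k%:Z * x.[k%:Z - 2].

(* Main.v *)
Require Import Defs.
From mathcomp Require Import all_boot all_order all_algebra.
From mathcomp Require Import ring lra zify.
Set Implicit Arguments. Unset Strict Implicit. Unset Printing Implicit Defensive.
Import Order.TTheory GRing.Theory Num.Theory.

Definition bb (n k : nat) : nat := 'C(n, k) * 'C(n + k, k).

Lemma binsym a k : 'C(a + k, a) = 'C(a + k, k).
Proof. by have := bin_sub (leq_addl a k); rewrite addnK. Qed.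

Lemma R1 n k : (n.+1 - k) * bb n.+1 k = (n.+1 + k) * bb n k.
Proof.
have H1 := mul_bin_down n.+1 k.
have H2 := mul_bin_diag (n.+1 + k) n.
rewrite /= in H1 H2.
rewrite binsym binsym in H2.
apply/eqP; rewrite -(eqn_pmul2l (ltn0Sn n)); apply/eqP.
rewrite /bb.
have -> : n.+1 * ((n.+1 - k) * ('C(n.+1, k) * 'C(n.+1 + k, k)))
  = ((n.+1 - k) * 'C(n.+1, k)) * (n.+1 * 'C(n.+1 + k, k)) by ring.
rewrite -H1 -H2; ring.
Qed.

Lemma R2 n j : (n - j) * (n + j).+1 * bb n j = j.+1 * j.+1 * bb n j.+1.
Proof.
have H1 := mul_bin_left n j.
have H2 := mul_bin_diag (n + j).+1 j.
rewrite /= in H2. rewrite /bb addnS.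
have -> : j.+1 * j.+1 * ('C(n, j.+1) * 'C((n + j).+1, j.+1))
  = (j.+1 * 'C(n, j.+1)) * (j.+1 * 'C((n + j).+1, j.+1)) by ring.
rewrite H1 -H2; ring.
Qed.

Lemma central n : n.+1 * 'C(n.*2.+2, n.+1) = 2 * (n.*2.+1) * 'C(n.*2, n).
Proof.
have H1 := mul_bin_diag (n.*2.+2) n.
have H2 := mul_bin_diag (n.*2.+1) n.
rewrite /= in H1 H2.
have e : 'C(n.*2.+1, n) = 'C(n.*2.+1, n.+1).
  by have := binsym n n.+1; rewrite addnS -addnn.
rewrite -H1 e.
have -> : n.*2.+2 * 'C(n.*2.+1, n.+1) = 2 * (n.+1 * 'C(n.*2.+1, n.+1)) by rewrite -addnn; ring.
by rewrite -H2 mulnA.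
Qed.

Definition cc n k := if k is j.+1 then bb n j else 0.

Lemma pw n k : n.+1 * bb n.+1 k + n * bb n.-1 k
   = (2*n+1) * bb n k + 2*(2*n+1) * cc n k.
Proof.
case: k => [|j]; first by rewrite /bb /cc !bin0; lia.
rewrite /cc.
case: (ltngtP j n) => hjn.
- have [m ->] : exists m, n = j.+1 + m by exists (n - j.+1); lia.
  have E1 : (m+1) * bb (j.+1 + m).+1 j.+1 = (2*j+m+3) * bb (j.+1+m) j.+1.
    have := R1 (j.+1+m) j.+1.
    have->: (j.+1+m).+1 - j.+1 = m+1 by lia.
    by have->: (j.+1+m).+1 + j.+1 = 2*j+m+3 by lia.
  have E3 : m * bb (j.+1+m) j.+1 = (2*j+m+2) * bb (j.+1 + m).-1 j.+1.
    have := R1 (j+m) j.+1.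
    have->: (j+m).+1 - j.+1 = m by lia.
    have->: (j+m).+1 + j.+1 = 2*j+m+2 by lia.
    by rewrite addSn.
  have E2 : (m+1)*(2*j+m+2) * bb (j.+1+m) j = (j+1)*(j+1) * bb (j.+1+m) j.+1.
    have := R2 (j.+1+m) j.
    have->: (j.+1+m) - j = m+1 by lia.
    have->: (j.+1 + m + j).+1 = 2*j+m+2 by lia.
    by move=> ->; rewrite addn1.
  set b0 := bb (j.+1+m) j.+1 in E1 E2 E3 *.
  set b1 := bb (j.+1 + m).+1 j.+1 in E1 *.
  set b2 := bb (j.+1+m) j in E2 *.
  set b3 := bb (j.+1 + m).-1 j.+1 in E3 *.
  clearbody b0 b1 b2 b3.
  apply/eqP; rewrite -(eqn_pmul2l (_ : 0 < (m+1)*(2*j+m+2))); last by lia.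
  apply/eqP.
  have -> : (m + 1) * (2 * j + m + 2) * ((j.+1 + m).+1 * b1 + (j.+1 + m) * b3)
    = (2*j+m+2)*(j+m+2)*((m+1)*b1) + (j+m+1)*(m+1)*((2*j+m+2)*b3).
    ring.
  rewrite E1 -E3.
  have -> : (m + 1) * (2 * j + m + 2) * ((2 * (j.+1 + m) + 1) * b0 + 2 * (2 * (j.+1 + m) + 1) * b2)
    = (m + 1) * (2 * j + m + 2) * (2 * (j.+1 + m) + 1) * b0 + 2 * (2 * (j.+1 + m) + 1) * ((m + 1) * (2 * j + m + 2) * b2).
    ring.
  rewrite E2. ring.
- have z1 : 'C(n.+1, j.+1) = 0 by apply: bin_small; lia.
  have z2 : 'C(n.-1, j.+1) = 0 by apply: bin_small; lia.
  have z3 : 'C(n, j.+1) = 0 by apply: bin_small; lia.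
  have z4 : 'C(n, j) = 0 by apply: bin_small; lia.
  by rewrite /bb z1 z2 z3 z4 !(muln0, mul0n).
- subst j.
  have z2 : 'C(n.-1, n.+1) = 0 by apply: bin_small; lia.
  have z3 : 'C(n, n.+1) = 0 by apply: bin_small; lia.
  rewrite /bb z2 z3 binn !(muln0, mul0n, addn0, add0n, mul1n) binn mul1n addnn.
  by rewrite doubleS central addnn !mul2n addn1.
Qed.

Local Open Scope ring_scope.

Lemma Dext n z N : (n < N)%N ->
  delannoy n z = \sum_(0 <= k < N) (bb n k)%:R * z ^+ k.
Proof.
move=> hN; rewrite /delannoy (@big_cat_nat _ _ _ n.+1 0 N _ _ (leq0n _) hN) /=.
have -> : \sum_(n.+1 <= k < N) (bb n k)%:R * z ^+ k = 0 :> int.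
  rewrite big_nat_cond big1 //.
  by move=> k /andP[/andP[hk _] _]; rewrite /bb bin_small // mul0n mul0r.
by rewrite addr0.
Qed.

Lemma pwz n k : (n.+1)%:R * (bb n.+1 k)%:R
  = (2*n+1)%:R * (bb n k)%:R + (2*(2*n+1))%:R * (cc n k)%:R
    - n%:R * (bb n.-1 k)%:R :> int.
Proof.
apply: (addIr (n%:R * (bb n.-1 k)%:R)); rewrite subrK -!natrM -!natrD.
by rewrite pw.
Qed.

Lemma Drec n z : (n.+1)%:R * delannoy n.+1 z
  = (2*n+1)%:R * (2*z+1) * delannoy n z - n%:R * delannoy n.-1 z :> int.
Proof.
have hc : z * delannoy n z = \sum_(0 <= k < n.+3) (cc n k)%:R * z ^+ k.
  rewrite big_nat_recl // /= mul0r add0r (@Dext n z n.+2); last lia.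
  rewrite mulr_sumr; apply: eq_bigr => k _; rewrite exprS /cc; ring.
have e : (2*n+1)%:R * (2*z+1) * delannoy n z
   = (2*n+1)%:R * delannoy n z + (2*(2*n+1))%:R * (z * delannoy n z).
  rewrite natrM; ring.
rewrite e hc (@Dext n.+1 z n.+3); last lia.
rewrite (@Dext n z n.+3); last lia.
rewrite (@Dext n.-1 z n.+3); last lia.
rewrite !mulr_sumr -big_split -sumrB /=.
by apply: eq_bigr => k _; rewrite !mulrA pwz; ring.
Qed.

Lemma Frec eps z n : (eps = 1 \/ eps = -1) ->
  (n.+1)%:Z * Fk eps n.+1 z
  = eps * (2 * n%:Z + 1) * (2 * z + 1) * Fk eps n z - n%:Z * Fk eps n.-1 z.
Proof.
move=> he; have D := Drec n z.
rewrite -!natz /Fk.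
have -> : (n.+1)%:R * (eps ^+ n.+1 * delannoy n.+1 z)
  = eps ^+ n.+1 * ((n.+1)%:R * delannoy n.+1 z) by ring.
rewrite D natrD natrM.
case: n {D} => [|m] /=.
  case: he => ->; ring.
rewrite !exprS.
case: he => ->; ring.
Qed.

Lemma Ssum eps z (x : {poly int}) n : (eps = 1 \/ eps = -1) ->
  \sum_(0 <= k < n) Lstar eps z x k * Fk eps k z
  = n%:Z * (x.[n%:Z - 1] * Fk eps n.-1 z - x.[n%:Z - 2] * Fk eps n z).
Proof.
move=> he; elim: n => [|n IH]; first by rewrite big_geq // mul0r.
rewrite big_nat_recr //= IH /Lstar.
have H := Frec z n he.
have e1 : (n.+1)%:Z - 1 = n%:Z by lia.
have e2 : (n.+1)%:Z - 2 = n%:Z - 1 by lia.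
have e0 : (n.+1)%:Z = n%:Z + 1 by lia.
rewrite e1 e2 e0 in H *.
have -> : (n%:Z + 1) * (x.[n%:Z] * Fk eps n z - x.[n%:Z - 1] * Fk eps n.+1 z)
  = (n%:Z + 1) * x.[n%:Z] * Fk eps n z - x.[n%:Z - 1] * ((n%:Z + 1) * Fk eps n.+1 z)
  by ring.
rewrite H; ring.
Qed.

Theorem corollary2p3 (eps z : int) (n : nat) (x : {poly int}) :
  (eps = 1 \/ eps = -1) -> (0 < n)%N ->
  (n%:Z %| \sum_(0 <= k < n) Lstar eps z x k * Fk eps k z)%Z.
Proof.
move=> he _; rewrite Ssum //.
exact: dvdz_mulr (dvdzz _).
Qed.
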